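(* Let $\mathbb K$ be an infinite field, $\mathcal M,\mathcal N$ vector spaces over $\mathbb K$, and $f:\mathcal M_{\mathrm{nc}}\to\mathcal N_{\mathrm{nc}}$ a nc function which is polynomial on slices, with $f|_{\mathcal M^{n\times n}}$ polynomial on slices of degree $L_n$. Assume that the degrees $L_n$, $n=1,2,\dots$, are bounded. Then $f$ is a nc polynomial over $\mathcal M$ with coefficients in $\mathcal N$: there exist $L\in\mathbb N$ and $\ell$-linear mappings $p_\ell:\mathcal M^\ell\to\mathcal N$, $\ell=0,\dots,L$, such that $f(X)=\sum_{\ell=0}^LX^{\odot\ell}p_\ell$ for all $n$ and all $X\in\mathcal M^{n\times n}$.
   Context: $\mathcal M_{\mathrm{nc}}=\coprod_n\mathcal M^{n\times n}$; matrices over $\mathbb K$ act on matrices over $\mathcal M,\mathcal N$ by matrix multiplication. A nc function $f:\mathcal M_{\mathrm{nc}}\to\mathcal N_{\mathrm{nc}}$ satisfies $f(\mathcal M^{n\times n})\subseteq\mathcal N^{n\times n}$, $f(X\oplus Y)=f(X)\oplus f(Y)$ where $X\oplus Y=\begin{bmatrix}X&0\\0&Y\end{bmatrix}$, and $f(SXS^{-1})=Sf(X)S^{-1}$ for invertible $S\in\mathbb K^{n\times n}$. $f|_{\mathcal M^{n\times n}}$ is polynomial on slices of degree $L_n$ if for all $Y,Z\in\mathcal M^{n\times n}$, $t\mapsto f(Y+tZ)$ ($t\in\mathbb K$) is a polynomial in $t$ with coefficients in $\mathcal N^{n\times n}$ of degree at most $L_n$, with equality for some $Y,Z$; $f$ is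 polynomial on slices if this holds for every $n$ with some $L_n$. For $X=[X_{ij}]\in\mathcal M^{n\times n}$, $X^{\odot\ell}$ is the $n\times n$ matrix over $\mathcal M^{\otimes\ell}$ with $(i,k)$ entry $\sum_{j_1,\dots,j_{\ell-1}}X_{ij_1}\otimes\cdots\otimes X_{j_{\ell-1}k}$, and $X^{\odot\ell}p_\ell\in\mathcal N^{n\times n}$ applies the linear map $\mathcal M^{\otimes\ell}\to\mathcal N$ induced by $p_\ell$ entrywise; $X^{\odot0}p_0=I_np_0$ for $p_0\in\mathcal N$. *)

(* Defs.v *)
From HB Require Import structures.
From mathcomp Require Import all_boot all_order all_algebra.
Set Implicit Arguments. Unset Strict Implicit. Unset Printing Implicit Defensive.
Import Order.TTheory GRing.Theory Num.Theory.
Local Open Scope ring_scope.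

Section NC.
Variables (K : fieldType) (M N : lmodType K).

Definition lactmx n (S : 'M[K]_n) (X : 'M[M]_n) : 'M[M]_n :=
  \matrix_(i, j) \sum_(k < n) S i k *: X k j.

Definition ractmx n (X : 'M[M]_n) (S : 'M[K]_n) : 'M[M]_n :=
  \matrix_(i, j) \sum_(k < n) S k j *: X i k.

Definition scalemx m n (t : K) (X : 'M[M]_(m, n)) : 'M[M]_(m, n) :=
  map_mx (fun x => t *: x) X.

Definition multilinear (l : nat) (p : {ffun 'I_l -> M} -> N) : Prop :=
  forall (i : 'I_l) (v : {ffun 'I_l -> M}) (a : K) (x y : M),
    p [ffun j => if j == i then a *: x + y else v j]
    = a *: p [ffun j => if j == i then x else v j]
      + p [ffun j => if j == i then y else v j].

(* X^{(.)l} p : entry (i,k) is the sum over index paths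
   i = j_0, j_1, ..., j_l = k of p(X_{j_0 j_1}, ..., X_{j_{l-1} j_l});
   for l = 0 this is I_n p_0. *)
Definition ncpow n (X : 'M[M]_n) (l : nat) (p : {ffun 'I_l -> M} -> N)
  : 'M[N]_n :=
  \matrix_(i, k)
    \sum_(j : {ffun 'I_l.+1 -> 'I_n} | (j ord0 == i) && (j ord_max == k))
      p [ffun r : 'I_l => X (j (widen_ord (leqnSn l) r)) (j (lift ord0 r))].

End NC.

Section NC2.
Variables (K : fieldType) (M N : lmodType K).

Definition nc_function (f : forall n, 'M[M]_n -> 'M[N]_n) : Prop :=
  (forall n m (X : 'M[M]_n) (Y : 'M[M]_m),
      f (n + m)%N (block_mx X 0 0 Y) = block_mx (f n X) 0 0 (f m Y)) /\
  (forall n (S : 'M[K]_n) (X : 'M[M]_n), S \in unitmx ->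
      f n (ractmx (lactmx S X) (invmx S))
      = ractmx (lactmx S (f n X)) (invmx S)).

Definition slice_poly_deg_le (f : forall n, 'M[M]_n -> 'M[N]_n) (n L : nat)
  : Prop :=
  forall Y Z : 'M[M]_n, exists c : 'I_L.+1 -> 'M[N]_n,
    forall t : K, f n (Y + scalemx t Z) = \sum_(i < L.+1) scalemx (t ^+ i) (c i).

End NC2.

(* Main.v *)
Require Import Defs.
From HB Require Import structures.
From mathcomp Require Import all_boot all_order all_algebra.
Set Implicit Arguments. Unset Strict Implicit. Unset Printing Implicit Defensive.
Import GRing.Theory.
Local Open Scope ring_scope.

Section Mul.
Variables (K : fieldType) (V : lmodType K).

Definition lmul m n p (S : 'M[K]_(m,n)) (X : 'M[V]_(n,p)) : 'M[V]_(m,p) :=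
  \matrix_(i,j) \sum_k S i k *: X k j.
Definition rmul m n p (X : 'M[V]_(m,n)) (S : 'M[K]_(n,p)) : 'M[V]_(m,p) :=
  \matrix_(i,j) \sum_k S k j *: X i k.

Lemma lmulA m n p q (S : 'M[K]_(m,n)) (T : 'M[K]_(n,p)) (X : 'M[V]_(p,q)) :
  lmul S (lmul T X) = lmul (S *m T) X.
Proof.
apply/matrixP=> i j; rewrite !mxE.
under eq_bigr do rewrite mxE scaler_sumr.
rewrite exchange_big; apply: eq_bigr => l _; rewrite mxE scaler_suml.
by apply: eq_bigr => k _; rewrite scalerA.
Qed.

Lemma rmulA m n p q (X : 'M[V]_(m,n)) (S : 'M[K]_(n,p)) (T : 'M[K]_(p,q)) :
  rmul (rmul X S) T = rmul X (S *m T).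
Proof.
apply/matrixP=> i j; rewrite !mxE.
under eq_bigr do rewrite mxE scaler_sumr.
rewrite exchange_big; apply: eq_bigr => l _; rewrite mxE scaler_suml.
by apply: eq_bigr => k _; rewrite scalerA mulrC.
Qed.

Lemma lrmulA m n p q (S : 'M[K]_(m,n)) (X : 'M[V]_(n,p)) (T : 'M[K]_(p,q)) :
  rmul (lmul S X) T = lmul S (rmul X T).
Proof.
apply/matrixP=> i j; rewrite !mxE.
under eq_bigr do rewrite mxE scaler_sumr.
rewrite exchange_big; apply: eq_bigr => l _; rewrite mxE scaler_sumr.
by apply: eq_bigr => k _; rewrite !scalerA mulrC.
Qed.

Lemma lmul1 m n (X : 'M[V]_(m,n)) : lmul 1%:M X = X.
Proof.
apply/matrixP=> i j; rewrite mxE (bigD1 i) //= big1 ?addr0 => [|k Hk].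
  by rewrite mxE eqxx scale1r.
by rewrite mxE eq_sym (negbTE Hk) scale0r.
Qed.

Lemma rmul1 m n (X : 'M[V]_(m,n)) : rmul X 1%:M = X.
Proof.
apply/matrixP=> i j; rewrite mxE (bigD1 j) //= big1 ?addr0 => [|k Hk].
  by rewrite mxE eqxx scale1r.
by rewrite mxE (negbTE Hk) scale0r.
Qed.

Lemma lmul_block m1 m2 n1 n2 p1 p2 (S11 : 'M[K]_(m1,n1)) (S12 : 'M[K]_(m1,n2))
  (S21 : 'M[K]_(m2,n1)) (S22 : 'M[K]_(m2,n2))
  (X11 : 'M[V]_(n1,p1)) (X12 : 'M[V]_(n1,p2)) (X21 : 'M[V]_(n2,p1)) (X22 : 'M[V]_(n2,p2)) :
  lmul (block_mx S11 S12 S21 S22) (block_mx X11 X12 X21 X22) =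
  block_mx (lmul S11 X11 + lmul S12 X21) (lmul S11 X12 + lmul S12 X22)
           (lmul S21 X11 + lmul S22 X21) (lmul S21 X12 + lmul S22 X22).
Proof.
apply/matrixP=> i j; rewrite -(splitK i) -(splitK j).
case: (split i) => i'; case: (split j) => j' /=;
rewrite mxE big_split_ord /= ?block_mxEul ?block_mxEur ?block_mxEdl ?block_mxEdr !mxE;
by congr (_ + _); apply: eq_bigr => k _; rewrite ?block_mxEul ?block_mxEur ?block_mxEdl ?block_mxEdr.
Qed.

Lemma rmul_block m1 m2 n1 n2 p1 p2 (S11 : 'M[K]_(n1,p1)) (S12 : 'M[K]_(n1,p2))
  (S21 : 'M[K]_(n2,p1)) (S22 : 'M[K]_(n2,p2))
  (X11 : 'M[V]_(m1,n1)) (X12 : 'M[V]_(m1,n2)) (X21 : 'M[V]_(m2,n1)) (X22 : 'M[V]_(m2,n2)) :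
  rmul (block_mx X11 X12 X21 X22) (block_mx S11 S12 S21 S22) =
  block_mx (rmul X11 S11 + rmul X12 S21) (rmul X11 S12 + rmul X12 S22)
           (rmul X21 S11 + rmul X22 S21) (rmul X21 S12 + rmul X22 S22).
Proof.
apply/matrixP=> i j; rewrite -(splitK i) -(splitK j).
case: (split i) => i'; case: (split j) => j' /=;
rewrite mxE big_split_ord /= ?block_mxEul ?block_mxEur ?block_mxEdl ?block_mxEdr !mxE;
by congr (_ + _); apply: eq_bigr => k _; rewrite ?block_mxEul ?block_mxEur ?block_mxEdl ?block_mxEdr.
Qed.

Lemma lmul0 m n p (X : 'M[V]_(n,p)) : lmul (0 : 'M[K]_(m,n)) X = 0.
Proof. by apply/matrixP=> i j; rewrite !mxE big1 // => k _; rewrite mxE scale0r. Qed.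
Lemma lmulx0 m n p (S : 'M[K]_(m,n)) : lmul S (0 : 'M[V]_(n,p)) = 0.
Proof. by apply/matrixP=> i j; rewrite !mxE big1 // => k _; rewrite mxE scaler0. Qed.
Lemma rmul0 m n p (X : 'M[V]_(m,n)) : rmul X (0 : 'M[K]_(n,p)) = 0.
Proof. by apply/matrixP=> i j; rewrite !mxE big1 // => k _; rewrite mxE scale0r. Qed.
Lemma rmulx0 m n p (S : 'M[K]_(n,p)) : rmul (0 : 'M[V]_(m,n)) S = 0.
Proof. by apply/matrixP=> i j; rewrite !mxE big1 // => k _; rewrite mxE scaler0. Qed.

End Mul.


Section Core.
Variables (K : fieldType) (M N : lmodType K).
Variable f : forall n, 'M[M]_n -> 'M[N]_n.
Hypothesis hnc : nc_function f.

Lemma intertw_ord n m (A : 'M[M]_n) (B : 'M[M]_m) (Q : 'M[K]_(n,m)) :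
  rmul A Q = lmul Q B -> rmul (f A) Q = lmul Q (f B).
Proof.
move=> hAB.
pose S : 'M[K]_(n+m) := block_mx 1%:M Q 0 1%:M.
pose Si : 'M[K]_(n+m) := block_mx 1%:M (-Q) 0 1%:M.
have SSi : S *m Si = 1%:M.
  rewrite mulmx_block !mulmx1 !mul1mx !mul0mx !mulmx0 !addr0 add0r addNr.
  by rewrite -scalar_mx_block.
have SiS : Si *m S = 1%:M by apply: mulmx1C.
have [Su _] := mulmx1_unit SSi.
have iS : invmx S = Si.
  by rewrite -[invmx S]mulmx1 -SSi mulmxA mulVmx // mul1mx.
have e1 : lmul S (block_mx A 0 0 B) = rmul (block_mx A 0 0 B) S.
  rewrite lmul_block rmul_block !lmul1 !rmul1 !lmul0 !lmulx0 !rmul0 !rmulx0.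
  by rewrite !addr0 !add0r hAB.
have := hnc.2 (n+m) S (block_mx A 0 0 B) Su.
rewrite iS /lactmx /ractmx -/(lmul S _) -/(rmul _ Si) e1 rmulA SSi rmul1.
rewrite -/(lmul S _) -/(rmul _ Si) hnc.1 => e2.
have e3 : rmul (block_mx (f A) 0 0 (f B)) S = lmul S (block_mx (f A) 0 0 (f B)).
  by rewrite {1}e2 rmulA SiS rmul1.
move: e3; rewrite lmul_block rmul_block !lmul1 !rmul1 !lmul0 !lmulx0 !rmul0 !rmulx0.
rewrite !addr0 !add0r => /eq_block_mx [_ -> _ _] //.
Qed.

End Core.


Lemma sum_enum (V : nmodType) (T : finType) (F : T -> V) :
  \sum_(k < #|T|) F (enum_val k) = \sum_y F y.
Proof.
by rewrite (reindex (@enum_val T _) (onW_bij _ (@enum_val_bij T))).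
Qed.

Lemma sum_kron_l (K : fieldType) (V : lmodType K) (T : finType) (a : T) (F : T -> V) :
  \sum_k ((k == a)%:R : K) *: F k = F a.
Proof.
rewrite (bigD1 a) //= eqxx scale1r big1 ?addr0 // => k /negbTE ->.
by rewrite scale0r.
Qed.

Lemma sum_kron_r (K : fieldType) (V : lmodType K) (T : finType) (a : T) (F : T -> V) :
  \sum_k ((a == k)%:R : K) *: F k = F a.
Proof. by under eq_bigr do rewrite eq_sym; apply: sum_kron_l. Qed.

Lemma sum_pair (V : nmodType) (A B : finType) (F : A * B -> V) :
  \sum_y F y = \sum_a \sum_b F (a, b).
Proof. by rewrite pair_big; apply: eq_bigr => [[]]. Qed.

Lemma scale_bool (K : fieldType) (V : lmodType K) (b : bool) (v : V) :
  (b%:R : K) *: v = if b then v else 0.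
Proof. by case: b; rewrite ?scale1r ?scale0r. Qed.

Section FT.
Variables (K : fieldType) (M N : lmodType K).
Variable f : forall n, 'M[M]_n -> 'M[N]_n.
Hypothesis hnc : nc_function f.

Definition mxT (V : Type) (T : finType) (A : T -> T -> V) : 'M[V]_#|T| :=
  \matrix_(i,j) A (enum_val i) (enum_val j).
Definition fT (T : finType) (A : T -> T -> M) : T -> T -> N :=
  fun x y => f (mxT A) (enum_rank x) (enum_rank y).

Lemma intertw (T U : finType) (A : T -> T -> M) (B : U -> U -> M) (Q : T -> U -> K) :
  (forall x u, \sum_y Q y u *: A x y = \sum_v Q x v *: B v u) ->
  forall x u, \sum_y Q y u *: fT A x y = \sum_v Q x v *: fT B v u.
Proof.
move=> h x u.
pose Q' : 'M[K]_(#|T|,#|U|) := \matrix_(i,j) Q (enum_val i) (enum_val j).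
have : rmul (f (mxT A)) Q' = lmul Q' (f (mxT B)).
  apply: (@intertw_ord K M N f hnc).
  apply/matrixP=> i j; rewrite !mxE.
  under eq_bigr do rewrite !mxE.
  under [RHS]eq_bigr do rewrite !mxE.
  by rewrite (sum_enum (fun y => Q y (enum_val j) *: A (enum_val i) y))
             (sum_enum (fun v => Q (enum_val i) v *: B v (enum_val j))).
move/matrixP/(_ (enum_rank x) (enum_rank u)); rewrite !mxE.
under eq_bigr do rewrite !mxE.
under [in RHS]eq_bigr do rewrite !mxE.
rewrite !enum_rankK => e.
rewrite -(sum_enum (fun y => Q y u *: fT A x y)) -(sum_enum (fun v => Q x v *: fT B v u)).
by rewrite /fT; under eq_bigr do rewrite enum_valK; under [RHS]eq_bigr do rewrite enum_valK.
Qed.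

Lemma fT_ord n (X : 'M[M]_n) (i j : 'I_n) : fT (fun a b => X a b) i j = f X i j.
Proof.
pose Q' : 'M[K]_(#|'I_n|,n) := \matrix_(i,j) ((enum_val i == j)%:R : K).
have : rmul (f (mxT (fun a b => X a b))) Q' = lmul Q' (f X).
  apply: (@intertw_ord K M N f hnc).
  apply/matrixP=> a b; rewrite !mxE.
  under eq_bigr do rewrite !mxE.
  under [RHS]eq_bigr do rewrite !mxE.
  rewrite (sum_enum (fun y => ((y == b)%:R : K) *: X (enum_val a) y)).
  by rewrite sum_kron_l sum_kron_r.
move/matrixP/(_ (enum_rank i) j); rewrite !mxE.
under eq_bigr do rewrite !mxE.
under [in RHS]eq_bigr do rewrite !mxE.
rewrite enum_rankK sum_kron_r => <-.
set g := f _.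
rewrite /fT -/g.
under eq_bigr => k _ do rewrite -[in g _ k](enum_valK k).
by rewrite (sum_enum (fun y => ((y == j)%:R : K) *: g (enum_rank i) (enum_rank y))) sum_kron_l.
Qed.

Lemma fT_ext (T : finType) (A A' : T -> T -> M) :
  (forall x y, A x y = A' x y) -> forall x y, fT A x y = fT A' x y.
Proof.
move=> h x y; rewrite /fT; congr (f _ _ _); apply/matrixP=> i j; by rewrite !mxE h.
Qed.

Variable Ldeg : nat -> nat.
Variable B : nat.
Hypothesis f_slices : forall n, (0 < n)%N -> slice_poly_deg_le f n (Ldeg n).
Hypothesis hB : forall n, (0 < n)%N -> (Ldeg n <= B)%N.

Lemma fT_slice (T : finType) : (0 < #|T|)%N -> forall Y Z : T -> T -> M,
  exists c : 'I_B.+1 -> T -> T -> N, forall t x y,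
    fT (fun a b => Y a b + t *: Z a b) x y = \sum_(i < B.+1) t ^+ i *: c i x y.
Proof.
move=> hT Y Z.
have [c hc] := f_slices hT (mxT Y) (mxT Z).
exists (fun i x y => if (i < (Ldeg #|T|).+1)%N then
   c (inord i) (enum_rank x) (enum_rank y) else 0) => t x y.
rewrite /fT.
have -> : mxT (fun a b => Y a b + t *: Z a b) = mxT Y + Defs.scalemx t (mxT Z).
  by apply/matrixP=> i j; rewrite !mxE.
rewrite hc summxE.
under eq_bigr do rewrite mxE.
rewrite (eq_bigr (fun i : 'I_ _ => (fun k : nat => t ^+ k *: c (inord k) (enum_rank x) (enum_rank y)) i)); last by move=> i _; rewrite inord_val.
rewrite (big_ord_widen (B.+1) (fun i => t ^+ i *: c (inord i) (enum_rank x) (enum_rank y))); last by rewrite ltnS hB.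
rewrite big_mkcond /=; apply: eq_bigr => i _.
by case: ifP => // _; rewrite scaler0.
Qed.

End FT.


Section Van.
Variables (K : fieldType) (V : lmodType K).
Hypothesis K_inf : forall s : seq K, exists x : K, x \notin s.

Lemma pick_pts (s : seq K) d : exists w : seq K,
  [/\ size w = d, uniq w & all (fun x => x \notin s) w].
Proof.
elim: d => [|d [w [hs hu ha]]]; first by exists [::].
have [x hx] := K_inf (w ++ s).
rewrite mem_cat negb_or in hx; case/andP: hx => hxw hxs.
by exists (x :: w); rewrite /= hs hxw hu hxs ha.
Qed.

Lemma poly_vanish d (a : 'I_d -> V) (s : seq K) :
  (forall t, t \notin s -> \sum_(i < d) t ^+ i *: a i = 0) -> forall i, a i = 0.
Proof.
move=> h k.
have [w [hs hu ha]] := pick_pts s d.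
pose r : 'rV[K]_d := \row_j w`_j.
pose Vm := Vandermonde d r.
have hV : Vm \in unitmx.
  rewrite unitmxE det_Vandermonde unitfE; apply/prodf_neq0 => i _.
  apply/prodf_neq0 => j hij; rewrite !mxE subr_eq0.
  rewrite nth_uniq ?hs //; by apply/eqP => /val_inj hji; move: hij; rewrite hji ltnn.
have hcol : forall j, \sum_i Vm i j *: a i = 0.
  move=> j; rewrite -[RHS](h (w`_j)); first by apply: eq_bigr => i _; rewrite !mxE.
  by apply: (allP ha); rewrite mem_nth ?hs.
have e : \sum_i (Vm *m invmx Vm) i k *: a i = a k.
  rewrite mulmxV // (bigD1 k) //= mxE eqxx scale1r big1 ?addr0 // => i /negbTE hi.
  by rewrite mxE hi scale0r.
rewrite -e.
under eq_bigr do rewrite mxE scaler_suml.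
rewrite exchange_big big1 // => j _.
under eq_bigr do rewrite mulrC -scalerA.
by rewrite -scaler_sumr hcol scaler0.
Qed.
End Van.


Section Tree.
Variables (K : fieldType) (M N : lmodType K).
Variable f : forall n, 'M[M]_n -> 'M[N]_n.
Hypothesis hnc : nc_function f.

Definition Jm l (v : {ffun 'I_l -> M}) : 'M[M]_l.+1 :=
  \matrix_(a, b) if (a.+1 == b :> nat) then oapp v 0 (insub (val a)) else 0.
Definition pp l (v : {ffun 'I_l -> M}) : N := f (Jm v) ord0 ord_max.

Variables (n : nat) (X : 'M[M]_n) (B : nat).

Definition cf (s : K) (a b : 'I_B.+2) : K :=
  (a.+1 == b :> nat)%:R + s * ((a == ord_max) && (b == ord_max))%:R.
Definition Cmat (s : K) (x y : 'I_B.+2 * 'I_n) : M := cf s x.1 y.1 *: X x.2 y.2.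

Section R.
Variable r : 'I_B.+1.
Let hr : (r.+1 <= B.+2)%N. Proof. by apply: leq_trans (ltn_ord r) _. Qed.
Let mC (m : 'I_r.+1) : 'I_B.+2 := widen_ord hr m.

Definition Jh (x y : 'I_r.+1 * {ffun 'I_r.+1 -> 'I_n}) : M :=
  if (x.1.+1 == y.1 :> nat) && [forall j, (j != x.1) ==> (x.2 j == y.2 j)]
  then X (x.2 x.1) (y.2 y.1) else 0.

Definition Q1 (y : 'I_B.+2 * 'I_n) (u : 'I_r.+1 * {ffun 'I_r.+1 -> 'I_n}) : K :=
  (y.1 == mC u.1)%:R * (y.2 == u.2 u.1)%:R.

Lemma mC_max (m : 'I_r.+1) : (mC m == ord_max) = false.
Proof.
apply/negbTE; rewrite -val_eqE /= neq_ltn; apply/orP; left.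
by apply: leq_ltn_trans (ltn_ord r); rewrite -ltnS.
Qed.

Lemma Jh_sum (i : 'I_n) (m' m : 'I_r.+1) (g : {ffun 'I_r.+1 -> 'I_n}) :
  \sum_(g' : {ffun 'I_r.+1 -> 'I_n}) ((i == g' m')%:R : K) *: Jh (m', g') (m, g) = (m'.+1 == m :> nat)%:R *: X i (g m).
Proof.
pose g0 : {ffun 'I_r.+1 -> 'I_n} := [ffun j => if j == m' then i else g j].
rewrite -(sum_kron_l g0 (fun g' => (m'.+1 == m :> nat)%:R *: X i (g m))).
apply: eq_bigr => g' _; rewrite /Jh /=.
case: (g' =P g0) => [->|ne].
  rewrite ffunE eqxx eqxx scale1r.
  have -> : [forall j, (j != m') ==> (g0 j == g j)].
    by apply/forallP => j; apply/implyP => hj; rewrite ffunE (negbTE hj).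
  by rewrite andbT scale1r scale_bool.
rewrite scale0r.
case: (i =P g' m') => [hi|]; last by rewrite scale0r.
case: forallP => [hf|_]; last by rewrite andbF scaler0.
exfalso; apply: ne; apply/ffunP => j; rewrite ffunE.
case: (j =P m') => [->//|/eqP hj].
by move: (hf j); rewrite hj => /eqP.
Qed.

Lemma H1 (s : K) x u :
  \sum_y Q1 y u *: Cmat s x y = \sum_v Q1 x v *: Jh v u.
Proof.
case: x => a i; case: u => m g.
rewrite !sum_pair /Q1 /Cmat /=.
under eq_bigr do under eq_bigr do rewrite -scalerA.
under eq_bigr do rewrite -scaler_sumr sum_kron_l.
rewrite sum_kron_l /cf mC_max andbF mulr0 addr0.
under [RHS]eq_bigr do under eq_bigr do rewrite -scalerA.
under [RHS]eq_bigr do rewrite -scaler_sumr Jh_sum.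
case: (ltnP a r.+1) => ha.
  rewrite -(sum_kron_l (Ordinal ha) (fun m' : 'I_r.+1 => (m'.+1 == m :> nat)%:R *: X i (g m))) /=.
  apply: eq_bigr => m' _; congr (_ *: _); congr (_%:R).
  by rewrite -!val_eqE /= eq_sym.
rewrite big1 => [|m' _].
  have -> : (a.+1 == m :> nat) = false.
    by apply/negbTE; rewrite neq_ltn; apply/orP; right; rewrite ltnS; apply: leq_trans (ltnW (ltn_ord m)) ha.
  by rewrite scale0r.
have -> : (a == mC m') = false.
  by apply/negbTE; rewrite -val_eqE /= neq_ltn; apply/orP; right; apply: leq_trans (ltn_ord m') ha.
by rewrite scale0r.
Qed.

Variable pi : {ffun 'I_r.+1 -> 'I_n}.
Definition Jpi (a b : 'I_r.+1) : M := if (a.+1 == b :> nat) then X (pi a) (pi b) else 0.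
Definition Q2 (j : 'I_r.+1) (u : 'I_r.+1 * {ffun 'I_r.+1 -> 'I_n}) : K :=
  (j == u.1)%:R * [forall q : 'I_r.+1, (u.1 <= q)%N ==> (u.2 q == pi q)]%:R.

Lemma Jh_sum2 (x m : 'I_r.+1) (g : {ffun 'I_r.+1 -> 'I_n}) :
  \sum_(g' : {ffun 'I_r.+1 -> 'I_n}) ([forall q : 'I_r.+1, (x <= q)%N ==> (g' q == pi q)]%:R : K) *: Jh (x, g') (m, g)
  = ([forall q : 'I_r.+1, (m <= q)%N ==> (g q == pi q)]%:R : K) *: Jpi x m.
Proof.
pose g0 : {ffun 'I_r.+1 -> 'I_n} := [ffun q => if q == x then pi x else g q].
rewrite -(sum_kron_l g0 (fun _ => ([forall q : 'I_r.+1, (m <= q)%N ==> (g q == pi q)]%:R : K) *: Jpi x m)).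
apply: eq_bigr => g' _; rewrite /Jh /Jpi /=.
case: (g' =P g0) => [->|ne].
  rewrite scale1r.
  have -> : [forall j, (j != x) ==> (g0 j == g j)].
    by apply/forallP => j; apply/implyP => hj; rewrite ffunE (negbTE hj).
  rewrite andbT ffunE eqxx.
  case hxm: (x.+1 == m :> nat); last by rewrite !scaler0.
  move/eqP: hxm => hxm.
  case: (boolP [forall q : 'I_r.+1, (m <= q)%N ==> (g q == pi q)]) => hP.
    have -> : [forall q : 'I_r.+1, (x <= q)%N ==> (g0 q == pi q)].
      apply/forallP => q; apply/implyP => hq; rewrite ffunE.
      case: (q =P x) => [->//|/eqP hqx].
      have hmq : (m <= q)%N by rewrite -hxm ltn_neqAle hq andbT eq_sym; exact: hqx.
      by move/forallP: hP => /(_ q); rewrite hmq.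
    by move/forallP: hP => /(_ m); rewrite leqnn /= => /eqP ->.
  have -> : [forall q : 'I_r.+1, (x <= q)%N ==> (g0 q == pi q)] = false.
    apply/negbTE; apply: contra hP => /forallP h; apply/forallP => q; apply/implyP => hq.
    have hqx : q != x by rewrite -val_eqE /= neq_ltn; apply/orP; right; rewrite -ltnS hxm.
    have hxq : (x <= q)%N by apply: leq_trans (leqnSn x) _; rewrite hxm.
    by move: (h q); rewrite ffunE (negbTE hqx) hxq.
  by rewrite !scale0r.
rewrite scale0r.
case: (boolP [forall q : 'I_r.+1, (x <= q)%N ==> (g' q == pi q)]) => hf; last by rewrite scale0r.
case: (boolP [forall j, (j != x) ==> (g' j == g j)]) => hf2; last by rewrite andbF scaler0.
exfalso; apply: ne; apply/ffunP => j; rewrite ffunE.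
case: (j =P x) => [->|/eqP hj].
  by move/forallP: hf => /(_ x); rewrite leqnn => /eqP.
by move/forallP: hf2 => /(_ j); rewrite hj => /eqP.
Qed.

Lemma H2 x u :
  \sum_y Q2 y u *: Jpi x y = \sum_v Q2 x v *: Jh v u.
Proof.
case: u => m g; rewrite sum_pair /Q2 /=.
under eq_bigr do rewrite mulrC -scalerA.
rewrite -scaler_sumr sum_kron_l.
under [RHS]eq_bigr do under eq_bigr do rewrite -scalerA.
under [RHS]eq_bigr do rewrite -scaler_sumr Jh_sum2.
by rewrite sum_kron_r.
Qed.

End R.

Lemma Jpi_Jm (r : 'I_B.+1) (pi : {ffun 'I_r.+1 -> 'I_n}) (a b : 'I_r.+1) :
  Jm [ffun q : 'I_r => X (pi (widen_ord (leqnSn r) q)) (pi (lift ord0 q))] a b = Jpi pi a b.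
Proof.
rewrite /Jm /Jpi mxE; case: eqP => // hab.
have ha : (a < r)%N by rewrite -ltnS hab.
rewrite insubT /= ffunE; congr (X (pi _) (pi _)); apply: val_inj => //=.
Qed.

Lemma tree (s : K) (r : 'I_B.+1) (i k : 'I_n) :
  fT f (Cmat s) (ord0, i) (widen_ord (leqnSn _) r, k) = ncpow X (pp (l:=r)) i k.
Proof.
pose gk : {ffun 'I_r.+1 -> 'I_n} := [ffun => k].
have I1 := intertw hnc (@H1 r s) (ord0, i) (ord_max, gk).
rewrite !sum_pair /Q1 /= in I1.
move: I1; under eq_bigr do under eq_bigr do rewrite -scalerA.
under eq_bigr do rewrite -scaler_sumr ffunE sum_kron_l.
rewrite sum_kron_l.
under [RHS]eq_bigr do under eq_bigr do rewrite -scalerA.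
under [RHS]eq_bigr do rewrite -scaler_sumr.
rewrite (@eq_bigr _ _ _ _ _ _ _ (fun m' => ((m' == ord0)%:R : K) *: \sum_(g' : {ffun 'I_r.+1 -> 'I_n}) ((i == g' m')%:R : K) *: fT f (Jh (r:=r)) (m', g') (ord_max, gk))); last first.
  by move=> m' _; congr (_%:R *: _); rewrite -!val_eqE /= eq_sym.
rewrite sum_kron_l => I1.
move: I1; set l1 := widen_ord _ (@ord_max r).
have -> : l1 = widen_ord (leqnSn B.+1) r by apply: val_inj.
move=> ->.
rewrite /ncpow mxE [RHS]big_mkcond /=; apply: eq_bigr => g' _.
have I2 := intertw hnc (@H2 r g') ord0 (ord_max, gk).
rewrite sum_pair /Q2 /= in I2.
move: I2; under eq_bigr do rewrite mulrC -scalerA.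
rewrite -scaler_sumr sum_kron_l.
under [RHS]eq_bigr do under eq_bigr do rewrite -scalerA.
under [RHS]eq_bigr do rewrite -scaler_sumr.
rewrite sum_kron_r.
rewrite (@eq_bigr _ _ _ _ _ _ _ (fun g'' => ((g'' == g')%:R : K) *: fT f (Jh (r:=r)) (ord0, g'') (ord_max, gk))); last first.
  move=> g'' _; congr ((nat_of_bool _)%:R *: _); apply/idP/eqP => [/forallP h|->]; last by apply/forallP => q; rewrite eqxx implybT.
  by apply/ffunP => q; move: (h q) => /implyP hh; apply/eqP; apply: hh.
rewrite sum_kron_l => <-.
have -> : [forall q : 'I_r.+1, (@ord_max r <= q)%N ==> (gk q == g' q)] = (k == g' ord_max).
  apply/forallP/idP => [h|/eqP hk q]; first by move: (h ord_max); rewrite leqnn ffunE.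
  apply/implyP => hq; rewrite ffunE hk; apply/eqP; congr (g' _); apply: val_inj => /=.
  by apply/eqP; rewrite eqn_leq hq -ltnS ltn_ord.
have hJ : forall a b, Jpi g' a b = Jm [ffun q : 'I_r => X (g' (widen_ord (leqnSn r) q)) (g' (lift ord0 q))] a b.
  by move=> a b; rewrite Jpi_Jm.
rewrite (fT_ext _ hJ).
rewrite fT_ord // /pp !scale_bool.
by rewrite ![_ == g' _]eq_sym; case: (g' ord0 == i); case: (g' ord_max == k).
Qed.

End Tree.


Section Main.
Variables (K : fieldType) (M N : lmodType K).
Hypothesis K_inf : forall s : seq K, exists x : K, x \notin s.
Variable f : forall n, 'M[M]_n -> 'M[N]_n.
Hypothesis hnc : nc_function f.
Variable Ldeg : nat -> nat.
Variable B : nat.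
Hypothesis f_slices : forall n, (0 < n)%N -> slice_poly_deg_le f n (Ldeg n).
Hypothesis hB : forall n, (0 < n)%N -> (Ldeg n <= B)%N.

Variables (n : nat) (X : 'M[M]_n).
Hypothesis hn : (0 < n)%N.

Lemma sum_cf (a : 'I_B.+2) : \sum_b cf 1 a b = 1 :> K.
Proof.
rewrite /cf big_split /=.
case: (a =P ord_max) => [->|ha].
  rewrite big1 ?add0r => [|b _]; last first.
    by rewrite /= (_ : (B.+2 == b :> nat) = false) //; apply/negbTE; rewrite eq_sym neq_ltn ltn_ord.
  rewrite (bigD1 ord_max) //= eqxx mulr1 big1 ?addr0 // => b /negbTE ->.
  by rewrite mulr0.
have hlt : (a.+1 < B.+2)%N.
  by rewrite ltnS ltn_neqAle -ltnS ltn_ord andbT; apply/eqP => h; apply: ha; apply: val_inj.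
rewrite [Y in _ + Y]big1 ?addr0 => [|b _]; last by rewrite mulr0.
rewrite (bigD1 (Ordinal hlt)) //= eqxx big1 ?addr0 // => b hb.
by case: eqP => // h; move: hb; rewrite -val_eqE /= h eqxx.
Qed.

Definition Cp (s : K) (x y : 'I_B.+2 * 'I_n) : M := (s * cf 1 x.1 y.1) *: X x.2 y.2.

Lemma E1 (s : K) (i k : 'I_n) :
  \sum_b fT f (Cp s) (ord0, i) (b, k) = fT f (fun a b => s *: X a b) i k.
Proof.
have I := intertw hnc (Q := fun (y : 'I_B.+2 * 'I_n) (u : 'I_n) => ((y.2 == u)%:R : K)) (A := Cp s) (B := fun a b => s *: X a b).
have hyp : forall (x : 'I_B.+2 * 'I_n) (u : 'I_n), \sum_y ((y.2 == u)%:R : K) *: Cp s x y = \sum_v ((x.2 == v)%:R : K) *: (s *: X v u).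
  move=> [a j] u; rewrite sum_pair /= sum_kron_r /Cp /=.
  under eq_bigr do rewrite sum_kron_l /=.
  by rewrite -scaler_suml -mulr_sumr sum_cf mulr1.
have := I hyp (ord0, i) k.
rewrite sum_pair /= sum_kron_r => <-.
by apply: eq_bigr => b _; rewrite sum_kron_l.
Qed.

Lemma sum_single (V : lmodType K) (T : finType) (c : T -> K) (F : T -> V) (u : T) :
  (forall y, y != u -> c y = 0) -> \sum_y c y *: F y = c u *: F u.
Proof.
move=> h; rewrite (bigD1 u) //= big1 ?addr0 // => y hy.
by rewrite h ?scale0r.
Qed.

Lemma E2 (s : K) (i k : 'I_n) (b : 'I_B.+2) : s != 0 ->
  fT f (Cp s) (ord0, i) (b, k) = s ^+ b *: fT f (Cmat X s) (ord0, i) (b, k).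
Proof.
move=> s0.
pose Q (y u : 'I_B.+2 * 'I_n) : K := (y == u)%:R * s ^- y.1.
have hyp : forall x u, \sum_y Q y u *: Cp s x y = \sum_v Q x v *: Cmat X s v u.
  move=> [a j] [b' k'].
  rewrite (sum_single _ (u := (b', k'))) => [|y hy]; last by rewrite /Q (negbTE hy) mul0r.
  rewrite (sum_single _ (u := (a, j))) => [|y hy]; last by rewrite /Q eq_sym (negbTE hy) mul0r.
  rewrite /Q /Cp /Cmat /= !eqxx !mul1r !scalerA; congr (_ *: _).
  rewrite /cf mul1r.
  case: (eqVneq (a.+1 : nat) b') => [h|h].
    have -> : (a == ord_max) && (b' == ord_max) = false.
      apply/negbTE; apply/negP => /andP [/eqP ha /eqP hb].
      by move: h; rewrite ha hb /= => /eqP; rewrite eqn_leq ltnn.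
    rewrite !mulr0 !addr0 mulr1 -h exprSr invfM -mulrA mulVf //.
  rewrite !add0r.
  case: (boolP ((a == ord_max) && (b' == ord_max))) => [/andP [/eqP -> /eqP ->]|_].
    by rewrite mulr1.
  by rewrite !mulr0.
have := intertw hnc hyp (ord0, i) (b, k).
rewrite (sum_single _ (u := (b, k))) => [|y hy]; last by rewrite /Q (negbTE hy) mul0r.
rewrite (sum_single _ (u := (ord0, i))) => [|y hy]; last by rewrite /Q eq_sym (negbTE hy) mul0r.
rewrite /Q /= !eqxx !mul1r expr0 invr1 scale1r => <-.
by rewrite scalerA mulrV ?scale1r // unitfE expf_neq0.
Qed.

Lemma main_entry (i k : 'I_n) :
  f X i k = (\sum_(l < B.+1) ncpow X (pp f (l:=l))) i k.
Proof.
have hCT : (0 < #|{: 'I_B.+2 * 'I_n}|)%N by rewrite card_prod !card_ord muln_gt0 hn.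
pose Y0 (x y : 'I_B.+2 * 'I_n) : M := ((x.1.+1 == y.1 :> nat)%:R : K) *: X x.2 y.2.
pose Z0 (x y : 'I_B.+2 * 'I_n) : M := (((x.1 == ord_max) && (y.1 == ord_max))%:R : K) *: X x.2 y.2.
have [c hc] := fT_slice f_slices hB hCT Y0 Z0.
have hIn : (0 < #|'I_n|)%N by rewrite card_ord.
have [d hd] := fT_slice f_slices hB hIn (fun _ _ => 0) (fun a b => X a b).
pose W (l : nat) := ncpow X (pp f (l:=l)) i k.
pose e (q : 'I_(B.+1 + B.+1)) : N := if (q < B.+1)%N then d (inord q) i k - W q
  else - c (inord (q - B.+1)) (ord0, i) (ord_max, k).
have he : forall s : K, s \notin [:: 0] -> \sum_(q < B.+1 + B.+1) s ^+ q *: e q = 0.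
  move=> s; rewrite inE => s0.
  have e1 : \sum_(j < B.+1) s ^+ j *: d j i k = fT f (fun a b => s *: X a b) i k.
    by rewrite -hd; apply: fT_ext => a b; rewrite add0r.
  rewrite -E1 (big_ord_recr B.+1) /= in e1.
  have hC : forall s' x y, fT f (Cmat X s') x y = fT f (fun a b => Y0 a b + s' *: Z0 a b) x y.
    by move=> s'; apply: fT_ext => a b; rewrite /Cmat /Y0 /Z0 /cf scalerDl scalerA.
  move: e1; rewrite E2 // hC hc.
  under [in RHS]eq_bigr do rewrite E2 // tree //.
  move=> e1.
  rewrite big_split_ord /=.
  have L1 : forall j : 'I_B.+1, e (lshift B.+1 j) = d j i k - W j.
    by move=> j; rewrite /e /= ltn_ord inord_val.
  have L2 : forall j : 'I_B.+1, e (rshift B.+1 j) = - c j (ord0,i) (ord_max,k).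
    by move=> j; rewrite /e /= ltnNge leq_addr /= addKn inord_val.
  under eq_bigr do rewrite L1 scalerBr.
  under [X in _ + X = _]eq_bigr do rewrite L2 exprD -scalerA scalerN.
  rewrite sumrB -scaler_sumr sumrN e1 /W /=.
  by rewrite scalerN addrAC addrK subrr.
have hdW : forall j : 'I_B.+1, d j i k = W j.
  move=> j; move: (poly_vanish K_inf he (lshift B.+1 j)).
  by rewrite /e /= ltn_ord inord_val => /eqP; rewrite subr_eq0 => /eqP.
rewrite -(fT_ord hnc) (@fT_ext _ _ _ f _ _ (fun a b => 0 + 1 *: X a b)); last first.
  by move=> a b; rewrite add0r scale1r.
rewrite hd summxE; apply: eq_bigr => j _.
by rewrite expr1n scale1r hdW.
Qed.

End Main.


Section Multi.
Variables (K : fieldType) (M N : lmodType K).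
Variable f : forall n, 'M[M]_n -> 'M[N]_n.
Hypothesis hnc : nc_function f.

Variables (l : nat) (i : 'I_l) (v : {ffun 'I_l -> M}) (x y : M).

Definition vv (u : {ffun 'I_l -> M}) (p : nat) : M := oapp u 0 (insub p).

Definition Hm (s t : 'I_l.+1 * bool) : M :=
  if (s.1.+1 == t.1 :> nat) then
    (if (s.1 < i)%N then (if s.2 == t.2 then vv v s.1 else 0)
     else if (s.1 == i :> nat) then (if t.2 then (if s.2 then x else y) else 0)
     else (if s.2 && t.2 then vv v s.1 else 0))
  else 0.

Definition coef (al be : K) (q : 'I_l.+1) (b : bool) : K :=
  if (q <= i)%N then (if b then al else be) else (b%:R).

Definition wv (al be : K) : {ffun 'I_l -> M} :=
  [ffun j => if j == i then al *: x + be *: y else v j].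

Lemma vv_wv al be p : vv (wv al be) p = if (p == i :> nat) then al *: x + be *: y else vv v p.
Proof.
rewrite /vv; case: (insubP 'I_l p) => [j hj <-|hp] /=.
  by rewrite ffunE.
case: eqP => // hpi; exfalso; move: hp; by rewrite hpi ltn_ord.
Qed.

Lemma Hhyp al be p u :
  \sum_p2 ((p2 == u.1)%:R * coef al be u.1 u.2) *: Jm (wv al be) p p2
  = \sum_w ((p == w.1)%:R * coef al be w.1 w.2) *: Hm w u.
Proof.
case: u => q b /=.
under eq_bigr do rewrite mulrC -scalerA.
rewrite -scaler_sumr sum_kron_l sum_pair /=.
under [RHS]eq_bigr do (under eq_bigr do rewrite -scalerA; rewrite -scaler_sumr).
rewrite sum_kron_r big_bool /= /Jm mxE /Hm /= -/(vv _ p) vv_wv /coef.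
case: eqP => [hq|]; last by rewrite !scaler0 addr0.
rewrite -hq.
case: (ltngtP p i) => hpi;
  by case: b => /=; rewrite ?scale1r ?scale0r ?scaler0 ?addr0 ?add0r ?scalerDr.
Qed.

Lemma multi_gen al be :
  pp f (wv al be) = al *: fT f Hm (ord0, true) (ord_max, true)
                    + be *: fT f Hm (ord0, false) (ord_max, true).
Proof.
have I := intertw hnc (A := fun p q => Jm (wv al be) p q) (B := Hm)
  (Q := fun p w => ((p == w.1)%:R : K) * coef al be w.1 w.2) (fun x u => Hhyp al be x u).
move: (I ord0 (ord_max, true)) => /=.
under eq_bigr do rewrite mulrC -scalerA.
rewrite -scaler_sumr sum_kron_l sum_pair /=.
under [RHS]eq_bigr do (under eq_bigr do rewrite -scalerA; rewrite -scaler_sumr).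
rewrite sum_kron_r big_bool /= /coef /= leqNgt ltn_ord /= scale1r (fT_ord hnc) /pp => ->.
by [].
Qed.

End Multi.

Lemma pp_multi (K : fieldType) (M N : lmodType K) (f : forall n, 'M[M]_n -> 'M[N]_n)
  (hnc : nc_function f) l : multilinear (pp f (l:=l)).
Proof.
move=> i v a x y.
have e1 : [ffun j => if j == i then a *: x + y else v j] = wv i v x y a 1.
  by apply/ffunP => j; rewrite !ffunE scale1r.
have e2 : [ffun j => if j == i then x else v j] = wv i v x y 1 0.
  by apply/ffunP => j; rewrite !ffunE scale1r scale0r addr0.
have e3 : [ffun j => if j == i then y else v j] = wv i v x y 0 1.
  by apply/ffunP => j; rewrite !ffunE scale1r scale0r add0r.
rewrite e1 e2 e3 !(multi_gen hnc) !scale1r !scale0r addr0 add0r.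
by [].
Qed.


Unset Implicit Arguments.

Theorem theorem6p8 (K : fieldType) (M N : lmodType K)
  (K_infinite : forall s : seq K, exists x : K, x \notin s)
  (f : forall n, 'M[M]_n -> 'M[N]_n)
  (f_nc : nc_function f)
  (Ldeg : nat -> nat)
  (f_slices : forall n, (0 < n)%N -> slice_poly_deg_le f n (Ldeg n))
  (L_bounded : exists B : nat, forall n, (0 < n)%N -> (Ldeg n <= B)%N) :
  exists (L : nat) (p : forall l : nat, {ffun 'I_l -> M} -> N),
    (forall l, (l <= L)%N -> multilinear (p l)) /\
    forall n (X : 'M[M]_n), (0 < n)%N ->
      f n X = \sum_(l < L.+1) ncpow X (p l).
Proof.
case: L_bounded => B hB.
exists B, (fun l => pp f (l:=l)); split; first by move=> l _; apply: pp_multi.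
move=> n X hn; apply/matrixP => i k.
exact: (main_entry K_infinite f_nc f_slices hB X hn).
Qed.
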